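(* Let $\Lambda,\Theta$ be Young functions of class $C^2$, and set $i_\lambda:=\inf_{t>0}\frac{t\Lambda''(t)}{\Lambda'(t)}$, $s_\lambda:=\sup_{t>0}\frac{t\Lambda''(t)}{\Lambda'(t)}$, $i_\theta:=\inf_{t>0}\frac{t\Theta''(t)}{\Theta'(t)}$, $s_\theta:=\sup_{t>0}\frac{t\Theta''(t)}{\Theta'(t)}$. Suppose $0<i_\lambda\le s_\lambda\le i_\theta\le s_\theta<+\infty$. Then $\Upsilon:=\Theta\circ\Lambda^{-1}$ is convex. If, moreover, $s_\Lambda<i_\Theta$, then $\Upsilon$ is a Young function.
   Context: A Young function is a convex $\Lambda:[0,\infty)\to[0,\infty)$ with $\Lambda(t)=0$ iff $t=0$, $\lim_{t\to0^+}\Lambda(t)/t=0$ and $\lim_{t\to\infty}\Lambda(t)/t=\infty$. For a differentiable Young function $\Lambda$, $i_\Lambda:=\inf_{t>0}\frac{t\Lambda'(t)}{\Lambda(t)}$ and $s_\Lambda:=\sup_{t>0}\frac{t\Lambda'(t)}{\Lambda(t)}$. *)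

(* Defs.v *)
From Stdlib Require Import Reals.
From Coquelicot Require Import Coquelicot.
Open Scope R_scope.

(* A function on [0,oo) is modelled as f : R -> R; only its values on [0,oo) matter. *)

Definition convex_nonneg (f : R -> R) : Prop :=
  forall x y l, 0 <= x -> 0 <= y -> 0 <= l <= 1 ->
    f (l * x + (1 - l) * y) <= l * f x + (1 - l) * f y.

Definition Young (f : R -> R) : Prop :=
  convex_nonneg f /\
  (forall t, 0 <= t -> 0 <= f t) /\
  (forall t, 0 <= t -> (f t = 0 <-> t = 0)) /\
  filterlim (fun t => f t / t) (at_right 0) (locally 0) /\
  is_lim (fun t => f t / t) p_infty p_infty.

Definition C2_pos (f : R -> R) : Prop :=
  forall t, 0 < t ->
    ex_derive f t /\ ex_derive (Derive f) t /\ continuous (Derive (Derive f)) t.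

(* i_F := inf_{t>0} t F'(t)/F(t),  s_F := sup_{t>0} t F'(t)/F(t)  (in Rbar) *)
Definition i_up (f : R -> R) : Rbar :=
  Glb_Rbar (fun x => exists t, 0 < t /\ x = t * Derive f t / f t).
Definition s_up (f : R -> R) : Rbar :=
  Lub_Rbar (fun x => exists t, 0 < t /\ x = t * Derive f t / f t).

Definition i_low (f : R -> R) : Rbar :=
  Glb_Rbar (fun x => exists t, 0 < t /\ x = t * Derive (Derive f) t / Derive f t).
Definition s_low (f : R -> R) : Rbar :=
  Lub_Rbar (fun x => exists t, 0 < t /\ x = t * Derive (Derive f) t / Derive f t).

(* Main.v *)
Require Import Defs.
From Stdlib Require Import Reals Lra.
From Coquelicot Require Import Coquelicot.
Open Scope R_scope.

Lemma mono_deriv (g dg : R -> R) (a b : R) : a <= b ->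
  (forall x, a <= x <= b -> is_derive g x (dg x)) ->
  (forall x, a <= x <= b -> 0 <= dg x) -> g a <= g b.
Proof.
  intros Hab Hd Hp.
  destruct (MVT_gen g a b dg) as [c [Hc E]].
  - intros x Hx. apply Hd. rewrite Rmin_left in Hx by lra. rewrite Rmax_right in Hx by lra. lra.
  - intros x Hx. rewrite Rmin_left in Hx by lra. rewrite Rmax_right in Hx by lra.
    apply continuity_pt_filterlim. apply (ex_derive_continuous (K:=R_AbsRing) (V:=R_NormedModule)). eexists. apply Hd. lra.
  - rewrite Rmin_left in Hc by lra. rewrite Rmax_right in Hc by lra.
    assert (0 <= dg c * (b - a)) by (apply Rmult_le_pos; [apply Hp; lra| lra]). lra.
Qed.

Lemma young_zero f : Young f -> f 0 = 0.
Proof. intros [_ [_ [H _]]]. apply H; lra. Qed.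

Lemma young_pos f t : Young f -> 0 < t -> 0 < f t.
Proof. intros Y Ht. destruct Y as [_ [H1 [H2 _]]].
  destruct (H1 t ltac:(lra)) as [h|h]; auto. exfalso. symmetry in h. apply (proj1 (H2 t ltac:(lra))) in h; lra. Qed.

Lemma young_incr f x y : Young f -> 0 <= x -> x < y -> f x < f y.
Proof.
  intros Y Hx Hxy. pose proof (young_pos f y Y ltac:(lra)) as Py.
  pose proof (young_zero f Y) as Z.
  destruct Y as [C _].
  assert (Hlt : x / y < 1).
  { unfold Rdiv. rewrite <- (Rinv_r y) by lra. apply Rmult_lt_compat_r; [apply Rinv_0_lt_compat|]; lra. }
  assert (Hl : 0 <= x / y <= 1).
  { split. apply Rdiv_le_0_compat; lra. lra. }
  pose proof (C y 0 (x/y) ltac:(lra) ltac:(lra) Hl) as H.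
  replace (x / y * y + (1 - x / y) * 0) with x in H by (field; lra).
  rewrite Z in H.
  assert (x / y * f y < f y) by nra. lra.
Qed.

Lemma young_small f : Young f -> forall eps, 0 < eps -> exists del, 0 < del /\
  forall x, 0 < x < del -> f x < eps * x.
Proof.
  intros Y eps He. destruct Y as [_ [_ [_ [L _]]]].
  apply filterlim_locally with (eps := mkposreal eps He) in L.
  destruct L as [d Hd]. exists d. split. apply cond_pos.
  intros x Hx. specialize (Hd x). 
  assert (B : ball 0 d x). { unfold ball; simpl; unfold AbsRing_ball, abs, minus, plus, opp; simpl.
    rewrite Rabs_pos_eq; lra. }
  specialize (Hd B ltac:(lra)). unfold ball in Hd; simpl in Hd; unfold AbsRing_ball, abs, minus, plus, opp in Hd; simpl in Hd.
  rewrite Ropp_0, Rplus_0_r in Hd. apply Rabs_def2 in Hd. destruct Hd as [Hd _].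
  apply (Rmult_lt_compat_r x) in Hd; [|lra]. unfold Rdiv in Hd. rewrite Rmult_assoc, Rinv_l in Hd; lra.
Qed.

Lemma deriv_nonneg f t l : (forall x y, 0 <= x -> x < y -> f x < f y) -> 0 < t ->
  is_derive f t l -> 0 <= l.
Proof.
  intros Hi Ht Hd. apply is_derive_Reals in Hd.
  destruct (Rle_or_lt 0 l) as [h|h]; auto. exfalso.
  destruct (Hd (- l) ltac:(lra)) as [d Hdd].
  set (h0 := d / 2).
  assert (0 < h0) by (unfold h0; pose proof (cond_pos d); lra).
  assert (Rabs h0 < d) by (rewrite Rabs_pos_eq; unfold h0; pose proof (cond_pos d); lra).
  specialize (Hdd h0 ltac:(lra) H0).
  pose proof (Hi t (t + h0) ltac:(lra) ltac:(lra)).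
  assert (0 < (f (t + h0) - f t) / h0) by (apply Rdiv_lt_0_compat; lra).
  apply Rabs_def2 in Hdd. lra.
Qed.
Lemma i_low_le f t : 0 < t -> Rbar_le (i_low f) (t * Derive (Derive f) t / Derive f t).
Proof. intros Ht. unfold i_low. destruct (Glb_Rbar_correct (fun x => exists t, 0 < t /\ x = t * Derive (Derive f) t / Derive f t)) as [H _].
  apply H. exists t; auto. Qed.
Lemma s_low_ge f t : 0 < t -> Rbar_le (t * Derive (Derive f) t / Derive f t) (s_low f).
Proof. intros Ht. unfold s_low. destruct (Lub_Rbar_correct (fun x => exists t, 0 < t /\ x = t * Derive (Derive f) t / Derive f t)) as [H _].
  apply H. exists t; auto. Qed.
Lemma i_up_le f t : 0 < t -> Rbar_le (i_up f) (t * Derive f t / f t).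
Proof. intros Ht. unfold i_up. destruct (Glb_Rbar_correct (fun x => exists t, 0 < t /\ x = t * Derive f t / f t)) as [H _].
  apply H. exists t; auto. Qed.
Lemma s_up_ge f t : 0 < t -> Rbar_le (t * Derive f t / f t) (s_up f).
Proof. intros Ht. unfold s_up. destruct (Lub_Rbar_correct (fun x => exists t, 0 < t /\ x = t * Derive f t / f t)) as [H _].
  apply H. exists t; auto. Qed.

Lemma young_le f x y : Young f -> 0 <= x -> x <= y -> f x <= f y.
Proof. intros Y Hx [h|h]. left; apply young_incr; auto. subst; lra. Qed.

Lemma deriv_pos f t : Young f -> C2_pos f -> 0 < t ->
  Rbar_lt 0 (t * Derive (Derive f) t / Derive f t) -> 0 < Derive f t.
Proof.
  intros Y C Ht H. simpl in H.
  assert (0 <= Derive f t).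
  { apply (deriv_nonneg f t); auto. intros; apply young_incr; auto.
    apply Derive_correct. apply (C t Ht). }
  destruct H0; auto. rewrite <- H0 in H. unfold Rdiv in H. rewrite Rinv_0, Rmult_0_r in H. lra.
Qed.
Section Conv.
Variables Lam Th : R -> R.
Hypothesis YL : Young Lam.
Hypothesis YT : Young Th.
Hypothesis CL : C2_pos Lam.
Hypothesis CT : C2_pos Th.
Hypothesis PL : forall t, 0 < t -> 0 < Derive Lam t.
Hypothesis PT : forall t, 0 < t -> 0 < Derive Th t.
Hypothesis Rat : forall t, 0 < t ->
  t * Derive (Derive Lam) t / Derive Lam t <= t * Derive (Derive Th) t / Derive Th t.

Let r t := Derive Th t / Derive Lam t.

Lemma r_mono x y : 0 < x -> x <= y -> r x <= r y.
Proof.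
  intros Hx Hxy.
  apply (mono_deriv r (fun t => (Derive (Derive Th) t * Derive Lam t - Derive Th t * Derive (Derive Lam) t) / Derive Lam t ^ 2)); auto.
  - intros t Ht. unfold r. apply is_derive_div.
    + apply Derive_correct. apply (CT t ltac:(lra)).
    + apply Derive_correct. apply (CL t ltac:(lra)).
    + pose proof (PL t ltac:(lra)); lra.
  - intros t Ht. assert (t0 : 0 < t) by lra.
    pose proof (PL t t0) as p. pose proof (PT t t0) as q. pose proof (Rat t t0) as R0.
    set (L2 := Derive (Derive Lam) t) in *. set (T2 := Derive (Derive Th) t) in *.
    set (p1 := Derive Lam t) in *. set (q1 := Derive Th t) in *.
    assert (E1 : t * L2 / p1 * (p1 * q1) = t * (L2 * q1)) by (field; lra).
    assert (E2 : t * T2 / q1 * (p1 * q1) = t * (T2 * p1)) by (field; lra).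
    assert (t * (L2 * q1) <= t * (T2 * p1)).
    { rewrite <- E1, <- E2. apply Rmult_le_compat_r; [nra|auto]. }
    assert (L2 * q1 <= T2 * p1) by nra.
    apply Rdiv_le_0_compat. lra. apply pow_lt; lra.
Qed.

Lemma r_pos t : 0 < t -> 0 < r t.
Proof. intros; unfold r; apply Rdiv_lt_0_compat; auto. Qed.

Lemma right_ineq t t2 : 0 < t -> t <= t2 -> r t * (Lam t2 - Lam t) <= Th t2 - Th t.
Proof.
  intros Ht Ht2.
  assert (H := mono_deriv (fun x => Th x - r t * Lam x) (fun x => Derive Th x - r t * Derive Lam x) t t2 Ht2).
  cut (Th t - r t * Lam t <= Th t2 - r t * Lam t2). lra.
  apply H.
  - intros x Hx. apply (is_derive_minus Th (fun y => r t * Lam y)).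
    + apply Derive_correct. apply (CT x ltac:(lra)).
    + apply is_derive_scal. apply Derive_correct. apply (CL x ltac:(lra)).
  - intros x Hx. pose proof (r_mono t x Ht (proj1 Hx)). pose proof (PL x ltac:(lra)).
    assert (Derive Th x = r x * Derive Lam x) by (unfold r; field; lra). nra.
Qed.

Lemma left_ineq t t1 : 0 < t1 -> t1 <= t -> Th t - Th t1 <= r t * (Lam t - Lam t1).
Proof.
  intros Ht Ht1.
  assert (H := mono_deriv (fun x => r t * Lam x - Th x) (fun x => r t * Derive Lam x - Derive Th x) t1 t Ht1).
  cut (r t * Lam t1 - Th t1 <= r t * Lam t - Th t). lra.
  apply H.
  - intros x Hx. apply (is_derive_minus (fun y => r t * Lam y) Th).
    + apply is_derive_scal. apply Derive_correct. apply (CL x ltac:(lra)).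
    + apply Derive_correct. apply (CT x ltac:(lra)).
  - intros x Hx. pose proof (r_mono x t ltac:(lra) (proj2 Hx)). pose proof (PL x ltac:(lra)).
    assert (Derive Th x = r x * Derive Lam x) by (unfold r; field; lra). nra.
Qed.

Lemma left_ineq0 t t1 : 0 <= t1 -> t1 <= t -> 0 < t -> Th t - Th t1 <= r t * (Lam t - Lam t1).
Proof.
  intros H0 H1 Ht. destruct H0 as [H0|H0]. apply left_ineq; auto.
  subst t1. rewrite (young_zero _ YL), (young_zero _ YT).
  apply Rnot_lt_le. intro Hc.
  set (d := Th t - 0 - r t * (Lam t - 0)).
  assert (dp : 0 < d) by (unfold d; lra).
  destruct (young_small Th YT 1 ltac:(lra)) as [del [Hdel Hs]].
  set (u := Rmin (del/2) (Rmin t (d/2))).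
  assert (u1 : 0 < u) by (unfold u; repeat apply Rmin_glb_lt; lra).
  assert (u2 : u <= del/2) by apply Rmin_l.
  assert (u3 : u <= t) by (unfold u; eapply Rle_trans; [apply Rmin_r| apply Rmin_l]).
  assert (u4 : u <= d/2) by (unfold u; eapply Rle_trans; [apply Rmin_r| apply Rmin_r]).
  pose proof (Hs u ltac:(lra)).
  pose proof (left_ineq t u u1 u3).
  pose proof (r_pos t Ht). pose proof (young_pos Lam u YL u1).
  assert (r t * Lam u > 0) by nra.
  unfold d in *. lra.
Qed.


Variable LamInv : R -> R.
Hypothesis HI : forall s, 0 <= s -> 0 <= LamInv s /\ Lam (LamInv s) = s.

Lemma inv_lt s1 s2 : 0 <= s1 -> s1 < s2 -> LamInv s1 < LamInv s2.
Proof.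
  intros H1 H2. destruct (HI s1 H1) as [a1 b1]. destruct (HI s2 ltac:(lra)) as [a2 b2].
  apply Rnot_le_lt. intro Hc. pose proof (young_le Lam _ _ YL a2 Hc). lra.
Qed.

Lemma three_pt s1 s s2 : 0 <= s1 -> s1 < s -> s < s2 ->
  (s2 - s1) * Th (LamInv s) <= (s2 - s) * Th (LamInv s1) + (s - s1) * Th (LamInv s2).
Proof.
  intros H0 H1 H2.
  pose proof (inv_lt s1 s H0 H1). pose proof (inv_lt s s2 ltac:(lra) H2).
  destruct (HI s1 H0) as [a1 b1]. destruct (HI s ltac:(lra)) as [a b]. destruct (HI s2 ltac:(lra)) as [a2 b2].
  set (t1 := LamInv s1) in *. set (t := LamInv s) in *. set (t2 := LamInv s2) in *.
  pose proof (left_ineq0 t t1 a1 ltac:(lra) ltac:(lra)) as L.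
  pose proof (right_ineq t t2 ltac:(lra) ltac:(lra)) as R1.
  rewrite b, b1 in L. rewrite b, b2 in R1.
  set (K := r t) in *.
  assert (A1 : (s2 - s) * (Th t - Th t1) <= (s2 - s) * (K * (s - s1))) by (apply Rmult_le_compat_l; lra).
  assert (A2 : (s - s1) * (K * (s2 - s)) <= (s - s1) * (Th t2 - Th t)) by (apply Rmult_le_compat_l; lra).
  nra.
Qed.

Lemma convex_U : convex_nonneg (fun s => Th (LamInv s)).
Proof.
  intros x y l Hx Hy Hl. simpl.
  destruct (Req_dec l 0) as [E|E]. subst l. replace (0 * x + (1 - 0) * y) with y by ring. lra.
  destruct (Req_dec l 1) as [E'|E']. subst l. replace (1 * x + (1 - 1) * y) with x by ring. lra.
  assert (0 < l < 1) by lra.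
  destruct (Rtotal_order x y) as [Hxy|[Hxy|Hxy]].
  - pose proof (three_pt x (l * x + (1 - l) * y) y Hx ltac:(nra) ltac:(nra)) as T3.
    replace (y - (l * x + (1 - l) * y)) with (l * (y - x)) in T3 by ring.
    replace (l * x + (1 - l) * y - x) with ((1 - l) * (y - x)) in T3 by ring.
    apply Rmult_le_reg_l with (y - x). lra. nra.
  - subst y. replace (l * x + (1 - l) * x) with x by ring. lra.
  - pose proof (three_pt y (l * x + (1 - l) * y) x Hy ltac:(nra) ltac:(nra)) as T3.
    replace (x - (l * x + (1 - l) * y)) with ((1 - l) * (x - y)) in T3 by ring.
    replace (l * x + (1 - l) * y - y) with (l * (x - y)) in T3 by ring.
    apply Rmult_le_reg_l with (x - y). lra. nra.
Qed.

End Conv.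
Section Lim.
Variables Lam Th LamInv : R -> R.
Hypothesis YL : Young Lam.
Hypothesis YT : Young Th.
Hypothesis CL : C2_pos Lam.
Hypothesis CT : C2_pos Th.
Hypothesis HI : forall s, 0 <= s -> 0 <= LamInv s /\ Lam (LamInv s) = s.
Variables a b : R.
Hypothesis Hab : a < b.
Hypothesis Ha : forall t, 0 < t -> t * Derive Lam t / Lam t <= a.
Hypothesis Hb : forall t, 0 < t -> b <= t * Derive Th t / Th t.

Let c := b - a.
Let phi x := ln (Th x) - ln (Lam x) - c * ln x.

Lemma phi_mono x y : 0 < x -> x <= y -> phi x <= phi y.
Proof.
  intros Hx Hxy.
  apply (mono_deriv phi (fun t => Derive Th t / Th t - Derive Lam t / Lam t - c / t)); auto.
  - intros t Ht. unfold phi.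
    pose proof (young_pos Th t YT ltac:(lra)). pose proof (young_pos Lam t YL ltac:(lra)).
    pose proof (proj1 (CT t ltac:(lra))). pose proof (proj1 (CL t ltac:(lra))).
    auto_derive.
    + repeat split; auto; lra.
    + change (Derive (fun x => Th x) t) with (Derive Th t). change (Derive (fun x => Lam x) t) with (Derive Lam t). field. repeat split; lra.
  - intros t Ht. assert (t0 : 0 < t) by lra.
    pose proof (young_pos Th t YT t0). pose proof (young_pos Lam t YL t0).
    pose proof (Ha t t0). pose proof (Hb t t0).
    assert (E : Derive Th t / Th t - Derive Lam t / Lam t - c / t =
      (t * Derive Th t / Th t - t * Derive Lam t / Lam t - c) / t) by (field; lra).
    rewrite E. apply Rdiv_le_0_compat; unfold c; lra.
Qed.
End Lim.
Lemma ball_R (x e y : R) : ball x e y <-> Rabs (y - x) < e.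
Proof. unfold ball; simpl; unfold AbsRing_ball, abs, minus, plus, opp; simpl. tauto. Qed.

Section Lim2.
Variables Lam Th LamInv : R -> R.
Hypothesis YL : Young Lam.
Hypothesis YT : Young Th.
Hypothesis CL : C2_pos Lam.
Hypothesis CT : C2_pos Th.
Hypothesis HI : forall s, 0 <= s -> 0 <= LamInv s /\ Lam (LamInv s) = s.
Variables a b : R.
Hypothesis Hab : a < b.
Hypothesis Ha : forall t, 0 < t -> t * Derive Lam t / Lam t <= a.
Hypothesis Hb : forall t, 0 < t -> b <= t * Derive Th t / Th t.

Let c := b - a.
Let phi x := ln (Th x) - ln (Lam x) - c * ln x.
Let PM := phi_mono Lam Th YL YT CL CT a b Ha Hb.

Lemma ratio_small t : 0 < t <= 1 -> ln (Th t / Lam t) <= phi 1 + c * ln t.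
Proof. intros Ht. pose proof (PM t 1 ltac:(lra) ltac:(lra)). fold c in H. fold (phi t) (phi 1) in H.
  pose proof (young_pos Th t YT ltac:(lra)). pose proof (young_pos Lam t YL ltac:(lra)).
  rewrite ln_div by lra. unfold phi in *. lra. Qed.

Lemma ratio_big t : 1 <= t -> phi 1 + c * ln t <= ln (Th t / Lam t).
Proof. intros Ht. pose proof (PM 1 t ltac:(lra) ltac:(lra)). fold c in H. fold (phi t) (phi 1) in H.
  pose proof (young_pos Th t YT ltac:(lra)). pose proof (young_pos Lam t YL ltac:(lra)).
  rewrite ln_div by lra. unfold phi in *. lra. Qed.

Lemma inv_pos s : 0 < s -> 0 < LamInv s.
Proof. intros Hs. destruct (HI s ltac:(lra)) as [h1 h2]. destruct h1 as [h|h]; auto.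
  rewrite <- h, (young_zero _ YL) in h2. lra. Qed.

Lemma lim0 : filterlim (fun s => Th (LamInv s) / s) (at_right 0) (locally 0).
Proof.
  apply filterlim_locally. intros eps.
  assert (cp : 0 < c) by (unfold c; lra).
  set (T0 := Rmin 1 (exp ((ln eps - phi 1)/c))).
  assert (T0p : 0 < T0) by (unfold T0; apply Rmin_glb_lt; [lra| apply exp_pos]).
  pose proof (young_pos Lam T0 YL T0p) as LT.
  unfold at_right, within, locally. exists (mkposreal (Lam T0) LT). intros s Hs Hs0.
  pose proof (proj1 (ball_R 0 (Lam T0) s) Hs) as Hs1. clear Hs. rewrite Rminus_0_r, Rabs_pos_eq in Hs1 by lra.
  pose proof (inv_pos s Hs0) as tp. destruct (HI s ltac:(lra)) as [_ Es].
  set (t := LamInv s) in *.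
  assert (tl : t < T0).
  { apply Rnot_le_lt. intro Hc. pose proof (young_le Lam T0 t YL ltac:(lra) Hc). lra. }
  assert (t1 : t <= 1) by (pose proof (Rmin_l 1 (exp ((ln eps - phi 1)/c))); fold T0 in H; lra).
  assert (t2 : t < exp ((ln eps - phi 1)/c)) by (pose proof (Rmin_r 1 (exp ((ln eps - phi 1)/c))); fold T0 in H; lra).
  apply ln_increasing in t2; auto. rewrite ln_exp in t2.
  assert (c * ln t < ln eps - phi 1).
  { apply Rmult_lt_compat_l with (r := c) in t2; auto.
    replace (c * ((ln eps - phi 1) / c)) with (ln eps - phi 1) in t2 by (field; lra). auto. }
  pose proof (ratio_small t ltac:(lra)).
  pose proof (young_pos Th t YT tp). pose proof (young_pos Lam t YL tp).
  assert (0 < Th t / Lam t) by (apply Rdiv_lt_0_compat; lra).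
  assert (Th t / Lam t < eps).
  { apply ln_lt_inv; auto. apply cond_pos. lra. }
  apply ball_R. rewrite Rminus_0_r, <- Es, Rabs_pos_eq; lra.
Qed.

Lemma liminf : is_lim (fun s => Th (LamInv s) / s) p_infty p_infty.
Proof.
  apply is_lim_spec. intros M. simpl.
  assert (cp : 0 < c) by (unfold c; lra).
  set (M' := Rmax M 1).
  assert (M'p : 0 < M') by (unfold M'; pose proof (Rmax_r M 1); lra).
  set (T := Rmax 1 (exp ((ln M' - phi 1)/c))).
  exists (Lam T). intros s Hs.
  assert (T1 : 1 <= T) by apply Rmax_l.
  assert (T2 : exp ((ln M' - phi 1)/c) <= T) by apply Rmax_r.
  pose proof (young_pos Lam T YL ltac:(lra)).
  assert (Hs0 : 0 < s) by lra.
  pose proof (inv_pos s Hs0) as tp. destruct (HI s ltac:(lra)) as [_ Es].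
  set (t := LamInv s) in *.
  assert (tl : T < t).
  { apply Rnot_le_lt. intro Hc. pose proof (young_le Lam t T YL ltac:(lra) Hc). lra. }
  assert (t2 : exp ((ln M' - phi 1)/c) < t) by lra.
  apply ln_increasing in t2; [|apply exp_pos]. rewrite ln_exp in t2.
  assert (ln M' - phi 1 < c * ln t).
  { apply Rmult_lt_compat_l with (r := c) in t2; auto.
    replace (c * ((ln M' - phi 1) / c)) with (ln M' - phi 1) in t2 by (field; lra). auto. }
  pose proof (ratio_big t ltac:(lra)).
  pose proof (young_pos Th t YT tp). pose proof (young_pos Lam t YL tp).
  assert (0 < Th t / Lam t) by (apply Rdiv_lt_0_compat; lra).
  assert (M' < Th t / Lam t).
  { apply ln_lt_inv; auto. lra. }
  rewrite <- Es. pose proof (Rmax_l M 1). fold M' in H6. lra.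
Qed.
End Lim2.
Theorem proposition2p11 (Lam Th LamInv : R -> R) :
  Young Lam -> Young Th -> C2_pos Lam -> C2_pos Th ->
  Rbar_lt (Finite 0) (i_low Lam) ->
  Rbar_le (i_low Lam) (s_low Lam) ->
  Rbar_le (s_low Lam) (i_low Th) ->
  Rbar_le (i_low Th) (s_low Th) ->
  Rbar_lt (s_low Th) p_infty ->
  (* LamInv is the inverse of Lam : [0,oo) -> [0,oo) *)
  (forall s, 0 <= s -> 0 <= LamInv s /\ Lam (LamInv s) = s) ->
  convex_nonneg (fun s => Th (LamInv s)) /\
  (Rbar_lt (s_up Lam) (i_up Th) -> Young (fun s => Th (LamInv s))).
Proof.
  intros YL YT CL CT H1 H2 H3 H4 H5 HI.
  assert (PL : forall t, 0 < t -> 0 < Derive Lam t).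
  { intros t Ht. apply (deriv_pos Lam t YL CL Ht). exact (Rbar_lt_le_trans _ _ _ H1 (i_low_le Lam t Ht)). }
  assert (PT : forall t, 0 < t -> 0 < Derive Th t).
  { intros t Ht. apply (deriv_pos Th t YT CT Ht).
    exact (Rbar_lt_le_trans _ _ _ (Rbar_lt_le_trans _ _ _ (Rbar_lt_le_trans _ _ _ H1 H2) H3) (i_low_le Th t Ht)). }
  assert (Rat : forall t, 0 < t ->
    t * Derive (Derive Lam) t / Derive Lam t <= t * Derive (Derive Th) t / Derive Th t).
  { intros t Ht. exact (Rbar_le_trans _ _ _ (Rbar_le_trans _ _ _ (s_low_ge Lam t Ht) H3) (i_low_le Th t Ht)). }
  pose proof (convex_U Lam Th YL YT CL CT PL PT Rat LamInv HI) as CV.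
  split; auto.
  intros Hs.
  assert (AB : exists a b, a < b /\ Rbar_le (s_up Lam) a /\ Rbar_le b (i_up Th)).
  { destruct (s_up Lam) as [x| |], (i_up Th) as [y| |]; simpl in Hs; try contradiction.
    - exists x, y. simpl. repeat split; lra.
    - exists x, (x + 1). simpl. repeat split; lra.
    - exists (y - 1), y. simpl. repeat split; lra.
    - exists 0, 1. simpl. repeat split; lra. }
  destruct AB as [a [b [Hab [Ha Hb]]]].
  assert (Ha' : forall t, 0 < t -> t * Derive Lam t / Lam t <= a).
  { intros t Ht. exact (Rbar_le_trans _ _ _ (s_up_ge Lam t Ht) Ha). }
  assert (Hb' : forall t, 0 < t -> b <= t * Derive Th t / Th t).
  { intros t Ht. exact (Rbar_le_trans _ _ _ Hb (i_up_le Th t Ht)). }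
  split; [exact CV|]. split; [|split; [|split]].
  - intros t Ht. destruct (HI t Ht) as [h _]. destruct YT as [_ [P _]]. apply P; auto.
  - intros t Ht. destruct (HI t Ht) as [h1 h2]. split.
    + intro E. destruct YT as [_ [_ [Z _]]]. apply (proj1 (Z _ h1)) in E.
      rewrite E, (young_zero _ YL) in h2. lra.
    + intro E. subst t. destruct YL as [_ [_ [Z _]]]. apply (proj1 (Z _ h1)) in h2.
      rewrite h2. apply young_zero; auto.
  - exact (lim0 Lam Th LamInv YL YT CL CT HI a b Hab Ha' Hb').
  - exact (liminf Lam Th LamInv YL YT CL CT HI a b Hab Ha' Hb').
Qed.
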